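(* Let $F$ be a commutative field, $\Sigma=\mathrm{PG}(n,F)$, $1\le h\le n-1$, and let $K$ be a linear complex of $h$-subspaces of $\Sigma$. Let $U\subseteq W$ be subspaces of $\Sigma$ with $\dim U\le h-1$ and $\dim W\ge h+1$, and put $K(U,W):=K\cap[U,W]_h$ (the elements of $K$ containing $U$ and contained in $W$). If $[U,W]_h\not\subseteq K$, then $K(U,W)$ is a linear complex of $(h-1-\dim U)$-subspaces in the projective space $[U,W]$.
   Context: A $d$-subspace is a projective subspace of dimension $d$; $[U,W]$ denotes the set of subspaces $X$ with $U\subseteq X\subseteq W$, and $[U,W]_d$ its members of dimension $d$. With $\dim U=k-1$, $[U,W]$ is a projective space isomorphic to $\mathrm{PG}(\dim W-k,F)$, whose $d$-dimensional subspaces are the $(k+d)$-subspaces of $\Sigma$ in $[U,W]$. Linear complex: let $N=\binom{n+1}{h+1}-1$ and let $\wp_{n,h}$ be the Plücker embedding sending the $h$-subspace spanned by linearly independent $v_0,\dots,v_h\in F^{n+1}$ to the point $F(v_0\wedge\cdots\wedge v_h)$ of $\mathrm{PG}(N,F)=\mathbb P(\bigwedge^{h+1}F^{n+1})$; its image is the Grassmann variety $\mathcal G_{n,h}$. A linear complex of $h$-subspaces is a set of the form $(H\cap\mathcal G_{n,h})^{\wp_{n,h}^{-1}}$ for a hyperplane $H$ of $\mathrm{PG}(N,F)$, i.e. the set of $h$-subspaces whose Plücker image lies in $H$. Linear complexes in the projective space $[U,W]$ are defined in the same way via an identification of $[U,W]$ with $\mathrm{PG}(\dim W-\dim U-1,F)$.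 *)

(* Defs.v *)
From HB Require Import structures.
From mathcomp Require Import all_boot all_order all_algebra.
Set Implicit Arguments. Unset Strict Implicit. Unset Printing Implicit Defensive.
Import GRing.Theory.
Local Open Scope ring_scope.

(* Projective geometry PG(m-1, F) is modelled by the vector space 'rV[F]_m:
   a projective d-subspace is a vector subspace X : {vspace 'rV[F]_m}
   with \dim X = d+1 (the empty projective subspace has \dim X = 0). *)

(* The (k x k) minor of M : 'M_(k, m) on the columns in S (a k-subset of
   column indices, taken in increasing order); 0 if #|S| <> k. *)
Definition minor_at (F : fieldType) (k m : nat) (M : 'M[F]_(k, m))
    (S : {set 'I_m}) : F :=
  if #|S| == k then
    match enum S with
    | [::] => 1
    | s0 :: _ => \det (\matrix_(i < k, j < k) M i (nth s0 (enum S) j))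
    end
  else 0.

Definition basis_mx (F : fieldType) (m : nat) (X : {vspace 'rV[F]_m}) :
    'M[F]_(\dim X, m) :=
  \matrix_(i < \dim X, j < m) (tnth (vbasis X) i) 0 j.

(* Plücker coordinates of X w.r.t. the standard basis e_S (S a
   (\dim X)-subset of {0..m-1}) of the exterior power: the maximal minors
   of a basis matrix.  F(v_0 /\ ... /\ v_h) = [plucker X]. *)
Definition plucker (F : fieldType) (m : nat) (X : {vspace 'rV[F]_m})
    (S : {set 'I_m}) : F := minor_at (basis_mx X) S.

(* K is a linear complex of projective (k-1)-subspaces of PG(m-1,F):
   K is the set of (k-1)-subspaces whose Plücker image lies in the
   hyperplane  sum_{#|S| = k} a_S p_S = 0  (a nonzero linear form). *)
Definition is_linear_complex (F : fieldType) (m k : nat)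
    (K : {vspace 'rV[F]_m} -> Prop) : Prop :=
  exists a : {set 'I_m} -> F,
    (exists S : {set 'I_m}, #|S| = k /\ a S != 0) /\
    forall X : {vspace 'rV[F]_m},
      K X <-> (\dim X = k /\
               \sum_(S : {set 'I_m} | #|S| == k) a S * plucker X S = 0).

(* An identification of the interval [U,W] with PG(d-1,F): a linear map g
   mapping W onto F^d with kernel (inside W) exactly U; it induces the
   bijection X |-> g(X) from [U,W] onto the subspaces of F^d. *)
Definition interval_identification (F : fieldType) (m d : nat)
    (U W : {vspace 'rV[F]_m}) (g : 'Hom('rV[F]_m, 'rV[F]_d)) : Prop :=
  (g @: W)%VS = fullv /\ (lker g :&: W)%VS = U.

Definition is_linear_complex_in (F : fieldType) (m k : nat)
    (U W : {vspace 'rV[F]_m}) (L : {vspace 'rV[F]_m} -> Prop) : Prop :=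
  exists (d : nat) (g : 'Hom('rV[F]_m, 'rV[F]_d)),
    interval_identification U W g /\
    is_linear_complex k
      (fun Y : {vspace 'rV[F]_d} =>
         exists X, L X /\ (U <= X)%VS /\ (X <= W)%VS /\ Y = (g @: X)%VS).

(* Main.v *)
Require Import Defs.
From HB Require Import structures.
From mathcomp Require Import all_boot all_order all_algebra.
From mathcomp Require Import all_fingroup zify.
Local Open Scope ring_scope.

Module Helpers.
Set Implicit Arguments. Unset Strict Implicit. Unset Printing Implicit Defensive.
Import GRing.Theory.
Section Core.
Variable F : fieldType.

Definition Dm (r k d : nat) (C : 'M[F]_(r, r + k)) (B : 'M[F]_(d, r + k))
  (f : 'I_k -> 'I_d) : F := \det (col_mx C (\matrix_(i, j) B (f i) j)).

Lemma stepA r k d (C : 'M[F]_(r, r + k)) (B : 'M[F]_(d, r + k)) (Y : 'M[F]_(k, d)) :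
  \det (col_mx C (Y *m B)) =
  \sum_(f : {ffun 'I_k -> 'I_d}) (\prod_i Y i (f i)) * Dm C B f.
Proof.
pose Cp (s : 'S_(r + k)) := \prod_(i < r) C i (s (lshift k i)).
have E1 (f : {ffun 'I_k -> 'I_d}) : Dm C B f =
   \sum_(s : 'S_(r + k)) (-1) ^+ s * (Cp s * \prod_(i < k) B (f i) (s (rshift r i))).
  rewrite /Dm /determinant; apply: eq_bigr => s _; congr (_ * _).
  rewrite big_split_ord /=; congr (_ * _); apply: eq_bigr => i _.
    by rewrite col_mxEu.
  by rewrite col_mxEd mxE.
under eq_bigr do rewrite E1 big_distrr /=.
rewrite exchange_big /determinant /=; apply: eq_bigr => s _.
rewrite big_split_ord /=.
under [X in _ * (_ * X)]eq_bigr do rewrite col_mxEd mxE.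
rewrite (bigA_distr_bigA (fun i l => Y i l * B l (s (rshift r i)))) /=.
rewrite !big_distrr /=; apply: eq_bigr => f _.
rewrite big_split /=.
under [X in _ * (X * _)]eq_bigr do rewrite col_mxEu.
rewrite /Cp; set y := \prod_(i < k) Y i (f i).
rewrite [_ * (y * _)]mulrCA. exact: mulrCA.
Qed.

Lemma Dm_ext r k d (C : 'M[F]_(r, r + k)) (B : 'M[F]_(d, r + k)) (f g : 'I_k -> 'I_d) :
  f =1 g -> Dm C B f = Dm C B g.
Proof. by move=> fg; rewrite /Dm; congr (\det (col_mx _ _)); apply/matrixP=> i j; rewrite !mxE fg. Qed.

Lemma Dm_noninj r k d (C : 'M[F]_(r, r + k)) (B : 'M[F]_(d, r + k)) (f : {ffun 'I_k -> 'I_d}) :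
  ~~ injectiveb f -> Dm C B f = 0.
Proof.
case/injectivePn => i1 [i2 Di12 Ef].
rewrite /Dm (@determinant_alternate _ _ _ (rshift r i1) (rshift r i2)) //.
  by rewrite (inj_eq (@rshift_inj _ _)).
by move=> j; rewrite !col_mxEd !mxE Ef.
Qed.

Lemma Dm_perm r k d (C : 'M[F]_(r, r + k)) (B : 'M[F]_(d, r + k)) (t : 'I_k -> 'I_d) (s : 'S_k) :
  Dm C B (fun i => t (s i)) = (-1) ^+ s * Dm C B t.
Proof.
rewrite /Dm.
have -> : \matrix_(i, j) B (t (s i)) j = perm_mx s *m \matrix_(i, j) B (t i) j.
  by rewrite -row_permE; apply/matrixP => i j; rewrite !mxE.
rewrite (_ : col_mx C (perm_mx s *m \matrix_(i, j) B (t i) j)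
   = block_mx 1%:M 0 0 (perm_mx s) *m col_mx C (\matrix_(i, j) B (t i) j)); last first.
  by rewrite mul_block_col !mul1mx !mul0mx addr0 add0r.
by rewrite det_mulmx; rewrite det_ublock det1 mul1r det_perm.
Qed.

Definition colsel p q m (M : 'M[F]_(p, m)) (S : {set 'I_m}) (x0 : 'I_m) : 'M[F]_(p, q) :=
  \matrix_(i, j) M i (nth x0 (enum S) j).

Lemma minor_atE q m (M : 'M[F]_(q, m)) S x0 :
  minor_at M S = if #|S| == q then \det (colsel q M S x0) else 0.
Proof.
rewrite /minor_at; case: eqP => // hS.
case E: (enum S) => [|s0 s].
  have q0 : q = 0%N by rewrite -hS cardE E.
  by subst q; move: M; rewrite q0 => M; rewrite det_mx00.
congr (\det _); apply/matrixP => i j; rewrite !mxE -E (set_nth_default x0) //.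
by rewrite -cardE hS ltn_ord.
Qed.

Lemma stepC r k d (y0 : 'I_d) (C : 'M[F]_(r, r + k)) (B : 'M[F]_(d, r + k)) (Y : 'M[F]_(k, d)) :
  \sum_(f : {ffun 'I_k -> 'I_d}) (\prod_i Y i (f i)) * Dm C B f =
  \sum_(T : {set 'I_d} | #|T| == k) minor_at Y T * Dm C B (fun i => nth y0 (enum T) i).
Proof.
rewrite (bigID (fun f : {ffun _} => injectiveb f)) /= [X in _ + X]big1 ?addr0;
  last by move=> f /Dm_noninj ->; rewrite mulr0.
rewrite (partition_big (fun f : {ffun 'I_k -> 'I_d} => [set f i | i : 'I_k])
           (fun T : {set 'I_d} => #|T| == k)) /=; last first.
  by move=> f /injectiveP finj; rewrite card_imset // card_ord.
apply: eq_bigr => T /eqP cardT.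
set t := fun i : 'I_k => nth y0 (enum T) i.
have szT : size (enum T) = k by rewrite -cardE.
have t_inj : injective t.
  by move=> i j /eqP; rewrite /t nth_uniq ?szT ?ltn_ord ?enum_uniq // => /eqP /val_inj.
have tT i : t i \in T by rewrite -mem_enum mem_nth // szT ltn_ord.
have indt i : index (t i) (enum T) = i by rewrite index_uniq ?szT ?ltn_ord ?enum_uniq.
pose h (g : {ffun 'I_k -> 'I_k}) : {ffun 'I_k -> 'I_d} := [ffun i => t (g i)].
pose h' (f : {ffun 'I_k -> 'I_d}) : {ffun 'I_k -> 'I_k} :=
  [ffun i => insubd i (index (f i) (enum T))].
rewrite (reindex_onto h h'); last first.
  move=> f /andP [_ /eqP imf]; apply/ffunP => i; rewrite !ffunE.
  have fiT : f i \in T by rewrite -imf; apply: imset_f.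
  have ilt : (index (f i) (enum T) < k)%N by move: (index_mem (f i) (enum T)); rewrite mem_enum fiT szT.
  rewrite /t val_insubd ilt.
  by rewrite nth_index // mem_enum.
rewrite (eq_bigl (fun g : {ffun 'I_k -> 'I_k} => injectiveb g)); last first.
  move=> g.
  have h'h : h' (h g) == g.
    apply/eqP/ffunP => i; rewrite !ffunE; apply: val_inj.
    by rewrite val_insubd indt ltn_ord.
  rewrite h'h andbT.
  have [ginj | gninj] := boolP (injectiveb g).
    have hinj : injective (h g).
      by move=> i j; rewrite !ffunE => /t_inj; move/injectiveP: ginj; apply.
    rewrite (introT (injectiveP _) hinj) /=.
    rewrite eqEcard; apply/andP; split.
      by apply/subsetP => x /imsetP [i _ ->]; rewrite ffunE.
    by rewrite card_imset // card_ord cardT.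
  apply/negbTE; apply: contra gninj => /andP [/injectiveP hinj _].
  by apply/injectiveP => i j gij; apply: hinj; rewrite !ffunE gij.
rewrite (reindex (@pval _)) /=; last first.
  pose in_Sn := insubd (1%g : 'S_k).
  by exists in_Sn => /= f Uf; first apply: val_inj; apply: insubdK.
rewrite (minor_atE _ _ y0) cardT eqxx /determinant big_distrl /=.
apply: eq_big => /= [s | s _]; first by rewrite (valP s).
rewrite (@Dm_ext _ _ _ _ _ _ (fun i => t (s i))); last by move=> i; rewrite /h ffunE pvalE.
rewrite Dm_perm mulrCA mulrA; congr (_ * _ * _).
by apply: eq_bigr => i _; rewrite /h ffunE !mxE pvalE.
Qed.
End Core.

Section Geo.
Variables (F : fieldType) (m : nat).
Implicit Types (X : {vspace 'rV[F]_m}).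

Lemma CE r k d (y0 : 'I_d) (C : 'M[F]_(r, r + k)) (B : 'M[F]_(d, r + k)) (Y : 'M[F]_(k, d)) :
  \det (col_mx C (Y *m B)) =
  \sum_(T : {set 'I_d} | #|T| == k) minor_at Y T * Dm C B (fun i => nth y0 (enum T) i).
Proof. by rewrite stepA (stepC y0). Qed.

Lemma row_basis X i : row i (basis_mx X) = (vbasis X)`_i.
Proof. by apply/rowP => j; rewrite !mxE (tnth_nth 0). Qed.

Lemma mul_basis X (c : 'rV[F]_(\dim X)) :
  c *m basis_mx X = \sum_i c 0 i *: (vbasis X)`_i.
Proof. by rewrite mulmx_sum_row; apply: eq_bigr => i _; rewrite row_basis. Qed.

Lemma mul_basis_mem X (c : 'rV[F]_(\dim X)) : c *m basis_mx X \in X.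
Proof.
rewrite mul_basis memv_suml // => i _; apply: memvZ; apply: vbasis_mem.
by apply: mem_nth; rewrite size_tuple ltn_ord.
Qed.

Lemma vec_span X v : v \in X -> v = (\row_i coord (vbasis X) i v) *m basis_mx X.
Proof.
by move=> vX; rewrite mul_basis {1}(coord_vbasis vX); apply: eq_bigr => i _; rewrite mxE.
Qed.

Lemma basis_row_free X : row_free (basis_mx X).
Proof.
apply: inj_row_free => c; rewrite mul_basis => H0; move/freeP: (basis_free (vbasisP X)) => /(_ _ H0) H.
by apply/rowP => i; rewrite mxE H.
Qed.

Lemma rows_span p X (A : 'M[F]_(p, m)) : (forall i, row i A \in X) ->
  A = (\matrix_i (\row_j coord (vbasis X) j (row i A))) *m basis_mx X.
Proof.
move=> AX; apply/row_matrixP => i; rewrite row_mul rowK.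
exact: vec_span.
Qed.

Lemma minor_mul a (x0 : 'I_m) (P : 'M[F]_a) (M : 'M[F]_(a, m)) S :
  minor_at (P *m M) S = \det P * minor_at M S.
Proof.
rewrite !(minor_atE _ _ x0); case: eqP => _; last by rewrite mulr0.
rewrite -det_mulmx; congr (\det _); apply/matrixP => i j; rewrite !mxE.
by apply: eq_bigr => l _; rewrite mxE.
Qed.

Lemma minor_change a b (x0 : 'I_m) (A : 'M[F]_(a, m)) (M : 'M[F]_(b, m))
  (P : 'M[F]_(a, b)) (Q : 'M[F]_(b, a)) :
  a = b -> A = P *m M -> M = Q *m A -> row_free A ->
  exists c : F, c != 0 /\ forall S, minor_at A S = c * minor_at M S.
Proof.
move=> eab; subst b => AP MQ Af.
have PQ : P *m Q = 1%:M.
  apply/eqP; rewrite -subr_eq0 -(mulmx_free_eq0 _ Af) mulmxBl mul1mx.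
  by rewrite -mulmxA -MQ -AP subrr.
exists (\det P); split.
  apply/eqP => dP; have := det_mulmx P Q; rewrite PQ det1 dP mul0r.
  by move/eqP; rewrite oner_eq0.
by move=> S; rewrite AP (minor_mul x0).
Qed.
End Geo.

Lemma colsel_col (F : fieldType) p1 p2 q m (A : 'M[F]_(p1, m)) (B : 'M[F]_(p2, m)) S x0 :
  colsel q (col_mx A B) S x0 = col_mx (colsel q A S x0) (colsel q B S x0).
Proof.
apply/matrixP => i j; rewrite !mxE; case: splitP => i' _; rewrite ?mxE //.
Qed.

Lemma colsel_mul (F : fieldType) p d q m (Y : 'M[F]_(p, d)) (B : 'M[F]_(d, m)) S x0 :
  colsel q (Y *m B) S x0 = Y *m colsel q B S x0.
Proof. by apply/matrixP => i j; rewrite !mxE; apply: eq_bigr => l _; rewrite !mxE. Qed.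

Lemma rows_col_mx (F : fieldType) m p1 p2 (X : {vspace 'rV[F]_m}) (A : 'M[F]_(p1, m)) (B : 'M[F]_(p2, m)) :
  (forall i, row i A \in X) -> (forall i, row i B \in X) -> forall i, row i (col_mx A B) \in X.
Proof.
move=> HA HB i; rewrite -(splitK i); case: (split i) => i' /=.
  by rewrite rowKu.
by rewrite rowKd.
Qed.

Definition bbdef (F : fieldType) (m d r : nat) (a : {set 'I_m} -> F) (BU : 'M[F]_(r, m))
  (Bc : 'M[F]_(d, m)) (x0 : 'I_m) (y0 : 'I_d) (kk : nat) (T : {set 'I_d}) : F :=
  \sum_(S : {set 'I_m} | #|S| == (r + kk)%N) a S *
     Dm (colsel (r + kk) BU S x0) (colsel (r + kk) Bc S x0) (fun i : 'I_kk => nth y0 (enum T) i).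
End Helpers.
Import Helpers.
Import GRing.Theory.

Theorem proposition5p2 (F : fieldType) (n h : nat)
    (K : {vspace 'rV[F]_(n.+1)} -> Prop)
    (U W : {vspace 'rV[F]_(n.+1)}) :
  (1 <= h)%N -> (h <= n - 1)%N ->
  is_linear_complex h.+1 K ->
  (U <= W)%VS ->
  (\dim U <= h)%N ->          (* dim U <= h - 1 (projectively) *)
  (h.+2 <= \dim W)%N ->       (* dim W >= h + 1 (projectively) *)
  (exists X : {vspace 'rV[F]_(n.+1)},
      (U <= X)%VS /\ (X <= W)%VS /\ \dim X = h.+1 /\ ~ K X) ->
  is_linear_complex_in (h.+1 - \dim U) U W
    (fun X => K X /\ (U <= X)%VS /\ (X <= W)%VS /\ \dim X = h.+1).
Proof.
move=> _ _ [a [[S0 [cS0 aS0]] Ka]] UW rU hW [X0 [UX0 [X0W [dX0 nK0]]]].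
pose x0 : 'I_n.+1 := ord0.
set r := \dim U.
set k := (h.+1 - r)%N.
have rk : (r + k)%N = h.+1 by rewrite /k subnKC // (leq_trans rU).
pose Wc := (W :\: U)%VS.
have WcW : (Wc <= W)%VS := diffvSl W U.
have capWc : (Wc :&: U = 0)%VS := capv_diff W U.
have addWc : (Wc + U = W)%VS by rewrite addv_diff; apply/addv_idPl.
pose d := \dim Wc.
pose BU := basis_mx U. pose Bc := basis_mx Wc.
have free2 : row_free (col_mx BU Bc).
  apply: inj_row_free => x; rewrite -[x]hsubmxK mul_row_col => H.
  set u := lsubmx x *m BU in H; set c := rsubmx x *m Bc in H.
  have uU : u \in U by apply: mul_basis_mem.
  have cW : c \in Wc by apply: mul_basis_mem.
  have cu : c = - u by apply/eqP; rewrite -addr_eq0 addrC H.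
  have c0 : c = 0.
    by apply/eqP; rewrite -memv0 -capWc memv_cap cW cu rpredN.
  have u0 : u = 0 by apply: oppr_inj; rewrite -cu c0 oppr0.
  have l0 : lsubmx x = 0 by apply/eqP; rewrite -(mulmx_free_eq0 _ (basis_row_free U)); apply/eqP.
  have r0 : rsubmx x = 0 by apply/eqP; rewrite -(mulmx_free_eq0 _ (basis_row_free Wc)); apply/eqP.
  by rewrite l0 r0 row_mx0.
have [G0 HG0] := row_freeP free2.
pose G := G0 *m col_mx (0 : 'M[F]_(r, d)) (1%:M : 'M[F]_d).
have : col_mx BU Bc *m G = col_mx 0 1%:M by rewrite mulmxA HG0 mul1mx.
rewrite mul_col_mx => /eq_col_mx [BUG BcG].
pose g : 'Hom('rV[F]_n.+1, 'rV[F]_d) := linfun (mulmxr G).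
pose lift : 'Hom('rV[F]_d, 'rV[F]_n.+1) := linfun (mulmxr Bc).
have gE x : g x = x *m G by rewrite lfunE.
have liftE y : lift y = y *m Bc by rewrite lfunE.
have gU u : u \in U -> g u = 0.
  by move=> uU; rewrite gE (vec_span uU) -mulmxA BUG mulmx0.
have liftWc y : lift y \in Wc by rewrite liftE mul_basis_mem.
have glift y : g (lift y) = y by rewrite gE liftE -mulmxA BcG mulmx1.
have decomp w : w \in W -> w - lift (g w) \in U.
  rewrite -addWc => /memv_addP [c cW [u uU ->]].
  rewrite linearD /= (gU u) // addr0.
  have cl : c = lift (\row_i coord (vbasis Wc) i c) by rewrite liftE -vec_span.
  by rewrite {2}cl glift -cl addrAC subrr add0r.
have keru : (lker g :&: W = U)%VS.
  apply/eqP; rewrite eqEsubv; apply/andP; split.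
    apply/subvP => w /memv_capP [wk wW]; have := decomp w wW.
    by move: wk; rewrite memv_ker => /eqP ->; rewrite linear0 subr0.
  by apply/subvP => u uU; rewrite memv_cap memv_ker gU // eqxx (subvP UW).
have img : (g @: W = fullv)%VS.
  apply/eqP; rewrite eqEsubv subvf /=; apply/subvP => y _.
  by rewrite -(glift y); apply: memv_img; apply: (subvP WcW).
have dimX X : (U <= X)%VS -> (X <= W)%VS -> \dim X = (r + \dim (g @: X))%N.
  move=> UX XW; rewrite -(limg_ker_dim g X); congr (_ + _)%N.
  suff -> : (X :&: lker g = U)%VS by [].
  apply/eqP; rewrite eqEsubv; apply/andP; split.
    apply/subvP => w /memv_capP [wX wk]; rewrite -keru memv_cap wk.
    exact: (subvP XW).
  by apply/subvP => u uU; rewrite memv_cap memv_ker gU // eqxx (subvP UX).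
have d_gt0 : (0 < d)%N.
  rewrite lt0n; apply/negP => /eqP d0.
  have : \dim W = r by rewrite -addWc (eqP (_ : Wc == 0%VS)) ?add0v // -dimv_eq0 -/d d0.
  by move=> dW; move: hW rU; rewrite dW; lia.
pose y0 : 'I_d := Ordinal d_gt0.
have KL X : (U <= X)%VS -> (X <= W)%VS -> \dim X = h.+1 ->
  exists c : F, c != 0 /\ \sum_(S : {set 'I_n.+1} | #|S| == h.+1) a S * plucker X S =
    c * \sum_(T : {set 'I_d} | #|T| == k) bbdef a BU Bc x0 y0 k T * plucker (g @: X) T.
  move=> UX XW dXh.
  set Y := (g @: X)%VS.
  have dY : \dim Y = k by apply/eqP; rewrite -(eqn_add2l r) rk -dXh (dimX X UX XW).
  pose M := col_mx BU (basis_mx Y *m Bc).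
  have rowsM : forall i, row i M \in X.
    apply: rows_col_mx => i.
      rewrite row_basis; apply: (subvP UX); apply: vbasis_mem; apply: mem_nth.
      by rewrite size_tuple ltn_ord.
    rewrite row_mul -liftE.
    have : row i (basis_mx Y) \in Y.
      by rewrite row_basis vbasis_mem // mem_nth // size_tuple ltn_ord.
    case/memv_imgP => x xX ->.
    have xu := decomp x (subvP XW x xX).
    rewrite (_ : lift (g x) = x - (x - lift (g x))); last first.
      by rewrite opprB addrCA subrr addr0.
    by rewrite rpredB // (subvP UX).
  pose zfun x := row_mx (\row_j coord (vbasis U) j (x - lift (g x)))
                        (\row_j coord (vbasis Y) j (g x)).
  have zE x : x \in X -> x = zfun x *m M.
    move=> xX; rewrite mul_row_col mulmxA -(vec_span (decomp x (subvP XW x xX))).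
    by rewrite -(vec_span (memv_img g xX)) -liftE subrK.
  have PM : basis_mx X = (\matrix_i zfun (row i (basis_mx X))) *m M.
    apply/row_matrixP => i; rewrite row_mul [X in _ = X *m _]rowK; apply: zE.
    by rewrite row_basis vbasis_mem // mem_nth // size_tuple ltn_ord.
  have MQ := rows_span rowsM.
  have [c [cnz Hc]] := minor_change x0 (dimX X UX XW) PM MQ (basis_row_free X).
  exists c; split => //.
  have E1 : \sum_(S : {set 'I_n.+1} | #|S| == h.+1) a S * plucker X S =
    c * \sum_(T : {set 'I_d} | #|T| == \dim Y) bbdef a BU Bc x0 y0 (\dim Y) T * plucker Y T.
    rewrite -dXh (dimX X UX XW).
    transitivity (\sum_(S : {set 'I_n.+1} | #|S| == (r + \dim Y)%N) \sum_(T : {set 'I_d} | #|T| == \dim Y)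
       c * (a S * (Dm (colsel (r + \dim Y) BU S x0) (colsel (r + \dim Y) Bc S x0)
                     (fun i => nth y0 (enum T) i) * plucker Y T))).
      apply: eq_bigr => S /eqP cS.
      rewrite /plucker Hc (minor_atE _ _ x0) cS eqxx colsel_col colsel_mul (CE y0).
      rewrite mulrCA !big_distrr /=; apply: eq_bigr => T _.
      by rewrite [minor_at _ _ * _]mulrC.
    rewrite exchange_big big_distrr /=; apply: eq_bigr => T _.
    rewrite /bbdef big_distrl big_distrr /=; apply: eq_bigr => S _.
    by congr (_ * _); rewrite mulrA.
  by rewrite E1 dY.
have XYfacts (Y : {vspace 'rV[F]_d}) :
  [/\ (U <= U + lift @: Y)%VS, (U + lift @: Y <= W)%VS & (g @: (U + lift @: Y) = Y)%VS].
  split; first exact: addvSl.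
    rewrite subv_add UW /=; apply/subvP => z /memv_imgP [y _ ->].
    exact: (subvP WcW).
  have gU0 : (g @: U = 0)%VS by apply/eqP; rewrite -lkerE; apply/subvP => u uU; rewrite memv_ker gU.
  rewrite limgD gU0 add0v -limg_comp.
  rewrite (_ : (g \o lift)%VF = \1%VF) ?lim1g //.
  by apply/lfunP => y; rewrite comp_lfunE id_lfunE glift.
exists d, g; split; first by split.
exists (bbdef a BU Bc x0 y0 k); split.
  case: (pickP (fun T : {set 'I_d} => (#|T| == k) && (bbdef a BU Bc x0 y0 k T != 0))).
    by move=> T /andP [/eqP cT bT]; exists T.
  move=> none; exfalso; apply: nK0; apply/Ka; split => //.
  have [c [_ Hc]] := KL X0 UX0 X0W dX0.
  rewrite Hc big1 ?mulr0 // => T cT; have := none T; rewrite cT /= => /negbFE /eqP ->.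
  by rewrite mul0r.
move=> Y; split.
  move=> [X [[KX [UX [XW dX]]] [_ [_ ->]]]].
  have [c [cnz Hc]] := KL X UX XW dX.
  split.
    by apply/eqP; rewrite -(eqn_add2l r) rk -dX (dimX X UX XW).
  have [_ sX] := (Ka X).1 KX.
  by move: sX; rewrite Hc => /eqP; rewrite mulf_eq0 (negbTE cnz) => /eqP.
move=> [dY sY].
have [UXY XYW gXY] := XYfacts Y.
set XY := (U + lift @: Y)%VS in UXY XYW gXY *.
have dXY : \dim XY = h.+1 by rewrite (dimX XY UXY XYW) gXY dY rk.
exists XY; split => //; split => //.
apply/Ka; split => //.
have [c [_ Hc]] := KL XY UXY XYW dXY.
by rewrite Hc gXY sY mulr0.
Qed.
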